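(* For every normed BPA system $\mathcal{G}=(V,\mathit{Act},\mathcal{R})$ (with $V$ linearly ordered) and all $\alpha,\beta\in V^*$: $\mathcal{T}^\mathcal{G}(\alpha)=\mathcal{T}^\mathcal{G}(\beta)$ if and only if $\alpha\sim\beta$ in $\mathcal{L}_\mathcal{G}$.
   Context: BPA system $\mathcal{G}=(V,\mathit{Act},\mathcal{R})$: finite variables $V$, finite actions (possibly with silent $\tau$), rules $A\xrightarrow{a}\alpha$; LTS $\mathcal{L}_\mathcal{G}$ on $V^*$ with $A\beta\xrightarrow{a}\alpha\beta$ for rules $A\xrightarrow{a}\alpha$. Normed: each variable can reach $\varepsilon$. $\sim$: branching bisimilarity in $\mathcal{L}_\mathcal{G}$ (largest relation $\mathcal{B}$ such that for $(s,t)\in\mathcal{B}$ each move $s\xrightarrow{a}s'$ is matched by $a=\tau,(s',t)\in\mathcal{B}$, or by $t=t_0\xrightarrow{\tau}\cdots\xrightarrow{\tau}t_k\xrightarrow{a}t'$ with $(s',t')\in\mathcal{B}$ and $(s,t_i)\in\mathcal{B}$ for $i\in[1,k]$; and symmetrically). Transducers read right to left: $q'\xleftarrow{A/\gamma}q$ means $\Delta(q,A)=(q',\gamma)$, extended to strings by $q\xleftarrow{\varepsilon/\varepsilon}q$ and composition ($q'\xleftarrow{A/\gamma}q$, $q''\xleftarrow{\alpha/\beta}q'$ give $q''\xleftarrow{\alpha A/\beta\gamma}q$); $\mathcal{T}_q(\alpha)$ is the output from $q$ on $\alpha$, $\mathcal{T}(\alpha)=\mathcal{T}_{q_0}(\alpha)$.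 Canonical transducer: $R_\gamma=\{X\in V\mid X\gamma\sim\gamma\}$; prefix $\alpha$ of $\alpha\gamma$ is redundancy-free if not of the form $\delta X\beta$ with $X\beta\gamma\sim\beta\gamma$; $\alpha$ lexicographically smaller than $\beta$ if $\alpha$ is a proper suffix of $\beta$ or $\alpha=\alpha'A\gamma,\beta=\beta'B\gamma$ with $A<B$. $\mathcal{T}^\mathcal{G}=(Q,V,\Delta,q_0)$: $Q=\{R_\gamma\mid\gamma\in V^*\}$, $q_0=R_\varepsilon$, $\Delta(R_\gamma,A)=(R_{A\gamma},\alpha)$ where $\alpha$ is lexicographically smallest among the longest strings with $\alpha\gamma\sim A\gamma$ and $\alpha$ a redundancy-free prefix of $\alpha\gamma$ (well defined, depends only on $R_\gamma$). *)

(* Defs.v *)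
From HB Require Import structures.
From mathcomp Require Import all_boot all_order.
From Stdlib Require Import Relations ClassicalEpsilon.
Set Implicit Arguments. Unset Strict Implicit. Unset Printing Implicit Defensive.
Import Order.TTheory.

Section BPA.
Variables (d : Order.disp_t) (V : finOrderType d) (Act : finType).

(* A BPA system: finite set of rules A --a--> alpha; the action [None] is the
   silent action tau, [Some a] a visible action. *)
Definition rules := seq (V * option Act * seq V).

Variable R : rules.

Definition step (s : seq V) (a : option Act) (t : seq V) : Prop :=
  exists (A : V) (beta alpha : seq V),
    s = A :: beta /\ (A, a, alpha) \in R /\ t = alpha ++ beta.

Definition reach : relation (seq V) :=
  clos_refl_trans (seq V) (fun u v => exists a, step u a v).

Definition normed : Prop := forall A : V, reach [:: A] [::].

Definition transfer (B : seq V -> seq V -> Prop) (s t : seq V) : Prop :=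
  forall a s', step s a s' ->
    (a = None /\ B s' t) \/
    exists tk t', clos_refl_trans (seq V)
                    (fun u v => step u None v /\ B s v) t tk
                  /\ step tk a t' /\ B s' t'.

Definition branching_bisimulation (B : seq V -> seq V -> Prop) : Prop :=
  forall s t, B s t -> transfer B s t /\ transfer (fun x y => B y x) t s.

Definition bbisim (s t : seq V) : Prop :=
  exists B, branching_bisimulation B /\ B s t.

Definition Rset (gamma : seq V) : V -> Prop := fun X => bbisim (X :: gamma) gamma.

Definition redundancy_free (alpha gamma : seq V) : Prop :=
  ~ exists (delta : seq V) (X : V) (beta : seq V),
      alpha = delta ++ X :: beta /\ bbisim (X :: beta ++ gamma) (beta ++ gamma).

(* lexicographic order (comparing from the right) *)
Definition lexlt (alpha beta : seq V) : Prop :=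
  (exists pre, pre != [::] /\ beta = pre ++ alpha) \/
  exists alpha' beta' (A B : V) gamma,
    alpha = alpha' ++ A :: gamma /\ beta = beta' ++ B :: gamma /\ (A < B)%O.

Definition candidate (A : V) (gamma alpha : seq V) : Prop :=
  bbisim (alpha ++ gamma) (A :: gamma) /\ redundancy_free alpha gamma.

Definition canonical_output (A : V) (gamma alpha : seq V) : Prop :=
  candidate A gamma alpha /\
  (forall beta, candidate A gamma beta -> size beta <= size alpha) /\
  (forall beta, candidate A gamma beta -> size beta = size alpha ->
     beta = alpha \/ lexlt alpha beta).

Record transducer := Transducer {
  tr_state : Type;
  tr_delta : tr_state -> V -> tr_state * seq V;
  tr_init : tr_state }.

(* run q alpha = (q', beta) iff  q' <-alpha/beta- q  (input read right to left) *)
Fixpoint tr_run (T : transducer) (q : tr_state T) (alpha : seq V)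
  : tr_state T * seq V :=
  match alpha with
  | [::] => (q, [::])
  | A :: alpha' =>
      let (q', out) := tr_run q alpha' in
      let (q'', o) := tr_delta q' A in (q'', o ++ out)
  end.

Definition tr_out (T : transducer) (alpha : seq V) : seq V :=
  (tr_run (tr_init T) alpha).2.

(* Canonical transducer: states are the sets R_gamma (as predicates on V);
   Delta(R_gamma, A) = (R_{A gamma}, alpha) computed from a representative gamma. *)
Definition canon_delta (q : V -> Prop) (A : V) : (V -> Prop) * seq V :=
  let gamma := epsilon (inhabits [::]) (fun g => Rset g = q) in
  (Rset (A :: gamma), epsilon (inhabits [::]) (canonical_output A gamma)).

Definition canonical_transducer : transducer :=
  @Transducer (V -> Prop) canon_delta (Rset [::]).

Definition TG (alpha : seq V) : seq V := tr_out canonical_transducer alpha.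

End BPA.

(* Main.v *)
Require Import Defs.
From mathcomp Require Import all_boot all_order.
From Stdlib Require Import Relations ClassicalEpsilon Classical FunctionalExtensionality PropExtensionality Lia.
From mathcomp Require Import zify.
Set Implicit Arguments. Unset Strict Implicit. Unset Printing Implicit Defensive.
Import Order.TTheory.

Section Dev.
Variables (d : Order.disp_t) (V : finOrderType d) (Act : finType) (R : rules V Act).

Local Notation step := (step R).
Local Notation bb := (bbisim R).

Lemma step_nil a t : ~ step [::] a t.
Proof. by case=> [A [b [al [H _]]]]. Qed.

Lemma step_cat x s a t : x != [::] -> step (x ++ s) a t -> exists x', step x a x' /\ t = x' ++ s.
Proof.
case: x => // X x _ /= [A [b [al [[<- <-] [H ->]]]]].
exists (al ++ x); split; [by exists X, x, al | by rewrite catA].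
Qed.

Lemma step_catl x s a x' : step x a x' -> step (x ++ s) a (x' ++ s).
Proof. case=> [A [b [al [-> [H ->]]]]]. exists A, (b ++ s), al. by rewrite -catA. Qed.

Lemma crt_mono (A : Type) (r1 r2 : relation A) x y : (forall a b, r1 a b -> r2 a b) ->
  clos_refl_trans A r1 x y -> clos_refl_trans A r2 x y.
Proof.
move=> H; elim=> [a b /H|a|a b c _ IH1 _ IH2]; [by constructor|by apply rt_refl|exact: rt_trans IH1 IH2].
Qed.

Lemma transfer_mono (B1 B2 : seq V -> seq V -> Prop) s t : (forall x y, B1 x y -> B2 x y) ->
  transfer R B1 s t -> transfer R B2 s t.
Proof.
move=> H T a s' Hs. case: (T a s' Hs) => [[-> Hb]|[tk [t' [P [S Hb]]]]]; [left; split; auto|right].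
exists tk, t'; split; [|split; auto]. apply: crt_mono P => u v [? ?]; split; auto.
Qed.

Lemma bb_bisim : branching_bisimulation R bb.
Proof.
move=> s t [B [HB Hst]]; case: (HB _ _ Hst) => T1 T2; split.
- by apply: transfer_mono T1 => x y Hxy; exists B.
- by apply: transfer_mono T2 => x y Hxy; exists B.
Qed.

Lemma bb_transfer s t : bb s t -> transfer R bb s t.
Proof. by move/bb_bisim=> []. Qed.

Lemma bb_sym s t : bb s t -> bb t s.
Proof.
move=> [B [HB H]]; exists (fun x y => B y x); split=> // x y Hxy.
by case: (HB _ _ Hxy).
Qed.

Lemma bb_refl s : bb s s.
Proof.
exists eq; split=> // x y <-; split=> a s' Hs; right; exists x, s'; (split; [apply rt_refl|by split]).
Qed.

Definition comp (x y : seq V) := exists u, bb x u /\ bb u y.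

Lemma WM s : forall u uk, clos_refl_trans_1n _ (fun x y => step x None y /\ bb s y) u uk ->
  bb s u -> forall t, bb u t -> exists tc,
    clos_refl_trans _ (fun x y => step x None y /\ comp s y) t tc /\ bb uk tc.
Proof.
move=> u uk; elim=> [x|x y z [Sxy Hsy] _ IH] Hsx t Hxt.
- by exists t; split; [apply rt_refl|].
- case: (bb_transfer Hxt Sxy) => [[_ Hyt]|[tk [t' [P [S Hyt']]]]].
  + by apply: IH.
  + case: (IH Hsy t' Hyt') => tc [P2 H2]. exists tc; split=> //.
    apply: (rt_trans _ _ _ tk).
      apply: crt_mono P => a b [Sa Ha]; split=> //; by exists x.
    apply: (rt_trans _ _ _ t') => //. apply: rt_step; split=> //; by exists y.
Qed.

Lemma path_last s u uk : clos_refl_trans_1n _ (fun x y => step x None y /\ bb s y) u uk ->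
  bb s u -> bb s uk.
Proof. by elim=> // x y z [_ H] _ IH _; apply: IH. Qed.

Lemma comp_transfer s t : comp s t -> transfer R comp s t.
Proof.
move=> [u [Hsu Hut]] a s' Ss.
case: (bb_transfer Hsu Ss) => [[-> Hs'u]|[uk [u' [P [Su Hs'u']]]]].
- by left; split=> //; exists u.
- have P1 := clos_rt_rt1n _ _ _ _ P.
  case: (WM P1 Hsu Hut) => tc [Pt Hukt].
  have Hsuk := path_last P1 Hsu.
  case: (bb_transfer Hukt Su) => [[Ha Hu'tc]|[tk [t' [P2 [S2 H2]]]]].
  + subst a. destruct (clos_rt_rtn1 _ _ _ _ Pt) as [|tp tc' [Stp Hc] Pn].
    * by left; split=> //; exists u'.
    * right; exists tp, tc'; split; [exact: clos_rtn1_rt|split=> //]; by exists u'.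
  + right; exists tk, t'; split; [|split=> //; by exists u'].
    apply: (rt_trans _ _ _ tc) => //. apply: crt_mono P2 => x y [Sx Hx]; split=> //; by exists uk.
Qed.

Lemma bb_trans s u t : bb s u -> bb u t -> bb s t.
Proof.
move=> H1 H2; exists comp; split; last by exists u.
move=> x y Hxy; split; first exact: comp_transfer.
case: Hxy => w [Hxw Hwy].
have : comp y x by exists w; split; apply: bb_sym.
move/comp_transfer; apply: transfer_mono => p q [z [Hpz Hzq]].
by exists z; split; apply: bb_sym.
Qed.


Lemma sym_bisim (B : seq V -> seq V -> Prop) : (forall x y, B x y -> B y x) ->
  (forall x y, B x y -> transfer R B x y) -> branching_bisimulation R B.
Proof.
move=> Hs Ht x y Hxy; split; first exact: Ht.
by apply: transfer_mono (Ht _ _ (Hs _ _ Hxy)) => p q /Hs.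
Qed.

Lemma crt_lift (r r' : relation (seq V)) g x y : (forall a b, r a b -> r' (a ++ g) (b ++ g)) ->
  clos_refl_trans _ r x y -> clos_refl_trans _ r' (x ++ g) (y ++ g).
Proof.
move=> H; elim=> [a b /H|a|a b c _ IH1 _ IH2]; [by constructor|by apply rt_refl|exact: rt_trans IH1 IH2].
Qed.

Lemma bb_congr_r a g h : bb g h -> bb (a ++ g) (a ++ h).
Proof.
move=> Hgh; exists (fun x y => exists a g h, x = a ++ g /\ y = a ++ h /\ bb g h); split; last by exists a, g, h.
apply: sym_bisim => [x y [a' [g' [h' [-> [-> H]]]]]|]; first by exists a', h', g'; split; [|split; [|apply: bb_sym]].
move=> x y [a' [g' [h' [-> [-> H]]]]].
case: a' => [|X a'] /=.
- apply: transfer_mono (bb_transfer H) => p q Hpq; by exists [::], p, q.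
- move=> b s' /(step_cat (isT : X :: a' != [::])) [x' [Sx ->]].
  right; exists (X :: a' ++ h'), (x' ++ h'); split; first exact: rt_refl.
  split; first exact: (step_catl h' Sx). by exists x', g', h'.
Qed.

Hypothesis HN : normed R.

Lemma reach_nil s : reach R s [::].
Proof.
elim: s => [|X s IH]; first exact: rt_refl.
apply: (rt_trans _ _ _ s) => //.
have L : forall p q, (exists a, step p a q) -> exists a, step (p ++ s) a (q ++ s).
  by move=> p q [b Hb]; exists b; exact: step_catl.
exact: (crt_lift L (HN X)).
Qed.

Lemma crt1n_nil (r : relation (seq V)) tk : (forall y, r [::] y -> False) ->
  clos_refl_trans_1n _ r [::] tk -> tk = [::].
Proof. by move=> H P; inversion P; [|case: (H y)]. Qed.

Lemma term_path_gen x z : clos_refl_trans_1n _ (fun u v => exists a, step u a v) x z -> z = [::] ->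
  bb x [::] -> clos_refl_trans _ (fun x y => step x None y /\ bb y [::]) x [::].
Proof.
move=> P; induction P as [u|u y w [a Sa] P' IH]; intros Hw Hx.
  by subst u; apply: rt_refl.
case: (bb_transfer Hx Sa) => [[Ha Hy]|[tk [t' [P [S _]]]]].
- subst a; apply: (rt_trans _ _ _ y); [by apply: rt_step|exact: IH].
- have Htk : tk = [::] by apply: (crt1n_nil _ (clos_rt_rt1n _ _ _ _ P)) => y0 [/step_nil].
  by rewrite Htk in S; case: (step_nil S).
Qed.

Lemma term_path s : bb s [::] ->
  clos_refl_trans _ (fun x y => step x None y /\ bb y [::]) s [::].
Proof. exact: (term_path_gen (clos_rt_rt1n _ _ _ _ (reach_nil s)) erefl). Qed.

Lemma bb_congr_l a b g : bb a b -> bb (a ++ g) (b ++ g).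
Proof.
move=> Hab; exists (fun x y => (exists a b, x = a ++ g /\ y = b ++ g /\ bb a b) \/ bb x y).
split; last by left; exists a, b.
apply: sym_bisim => [x y [[a' [b' [-> [-> H]]]]|H]|].
- by left; exists b', a'; split; [|split; [|apply: bb_sym]].
- by right; apply: bb_sym.
move=> x y [[a' [b' [-> [-> H]]]]|H]; last first.
  by apply: transfer_mono (bb_transfer H) => p q Hpq; right.
case: a' H => [|X a'] H c s' Hs.
- case: b' H => [|Y b'] H.
  + right; exists g, s'; split; [exact: rt_refl|split=> //]. by right; apply bb_refl.
  + right; exists g, s'; split; last by split=> //; right; apply bb_refl.
    have := term_path (bb_sym H).
    apply: crt_lift => p q [Sp Hq]; split; first exact: step_catl.
    by left; exists [::], q; split; [|split; [|apply: bb_sym]].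
- move: Hs => /(step_cat (isT : X :: a' != [::])) [x' [Sx ->]].
  case: (bb_transfer H Sx) => [[-> Hy]|[tk [t' [P [S Hb]]]]].
  + by left; split=> //; left; exists x', b'.
  + right; exists (tk ++ g), (t' ++ g); split; last first.
      split; [exact: step_catl|by left; exists x', t'].
    apply: crt_lift P => p q [Sp Hq]; split; first exact: step_catl.
    by left; exists (X :: a'), q.
Qed.

Inductive cpath : seq V -> nat -> Prop :=
| cp_nil n : cpath [::] n
| cp_inert s s' n : step s None s' -> bb s s' -> cpath s' n -> cpath s n
| cp_step s a s' n : step s a s' -> cpath s' n -> cpath s n.+1.

Lemma cpath_mono s n m : cpath s n -> n <= m -> cpath s m.
Proof.
move=> P; elim: P m => [k|x y k Sx Hb _ IH|x a y k Sx _ IH] m Hm.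
- exact: cp_nil.
- exact: (cp_inert Sx Hb (IH _ Hm)).
- case: m Hm => // m Hm; exact: (cp_step Sx (IH _ Hm)).
Qed.

Lemma cpath_exists s : exists n, cpath s n.
Proof.
suff : forall x z, clos_refl_trans_1n _ (fun u v => exists a, step u a v) x z -> z = [::] ->
  exists n, cpath x n by apply; [exact: (clos_rt_rt1n _ _ _ _ (reach_nil s))|].
move=> x z P; induction P as [u|u y w [a Sa] P' IH] => Hz.
  by subst u; exists 0; apply: cp_nil.
case: (IH Hz) => n Hn; exists n.+1; exact: (cp_step Sa Hn).
Qed.

Lemma cpath_back s x z n : clos_refl_trans_1n _ (fun x y => step x None y /\ bb s y) x z ->
  bb s x -> cpath z n -> cpath x n.
Proof.
move=> P; induction P as [u|u y w [Sy Hy] P' IH] => Hu Hc //.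
apply: (cp_inert Sy) (IH Hy Hc). exact: bb_trans (bb_sym Hu) Hy.
Qed.

Lemma cpath_bb s n : cpath s n -> forall t, bb s t -> cpath t n.
Proof.
elim=> [k|x y k Sx Hb _ IH|x a y k Sx _ IH] t Ht.
- have P := clos_rt_rt1n _ _ _ _ (term_path (bb_sym Ht)).
  apply: (cpath_back (s := [::])) (cp_nil k); last exact: Ht.
  apply: clos_rt_rt1n; apply: crt_mono (clos_rt1n_rt _ _ _ _ P) => p q [Sp Hq].
  by split=> //; apply: bb_sym.
- apply: IH; exact: bb_trans (bb_sym Hb) Ht.
- case: (bb_transfer Ht Sx) => [[_ Hy]|[tk [t' [P [S Hb]]]]].
  + apply: cpath_mono (IH _ Hy) _; exact: leqnSn.
  + apply: (cpath_back (clos_rt_rt1n _ _ _ _ P) Ht). exact: (cp_step S (IH _ Hb)).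
Qed.

Lemma cpath_split g s n : cpath s n -> forall e, s = e ++ g ->
  (bb s g /\ cpath g n) \/ (0 < n /\ cpath g n.-1).
Proof.
elim=> [k|x y k Sx Hb Hc IH|x a y k Sx Hc IH] e He.
- case: e He => [|? ?] //= Hg; subst g; left; split; [exact: bb_refl|exact: cp_nil].
- case: e He => [|X e] He.
    by subst x; left; split; [exact: bb_refl|exact: (cp_inert Sx Hb Hc)].
  move: Sx; rewrite He => /(step_cat (isT : X :: e != [::])) [x' [_ Hy]].
  case: (IH _ Hy) => [[H1 H2]|H]; last by right.
  by left; split=> //; move: Hb; rewrite He => Hb; exact: bb_trans Hb H1.
- case: e He => [|X e] He.
    by subst x; left; split; [exact: bb_refl|exact: (cp_step Sx Hc)].
  move: Sx; rewrite He => /(step_cat (isT : X :: e != [::])) [x' [_ Hy]].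
  case: (IH _ Hy) => [[H1 H2]|[H1 H2]]; right; split=> //.
  apply: cpath_mono H2 _; exact: leq_pred.
Qed.

Lemma cpath_suffix e g n : cpath (e ++ g) n -> cpath g n.
Proof.
move=> Hc; have [[_ H]|[_ H]] := @cpath_split g _ _ Hc e erefl => //.
apply: cpath_mono H _; exact: leq_pred.
Qed.

Lemma ex_min (P : nat -> Prop) : (exists n, P n) -> exists n, P n /\ forall m, P m -> n <= m.
Proof.
move=> [n Pn]; elim/ltn_ind: n Pn => n IH Pn.
case: (classic (exists m, P m /\ m < n)) => [[m [Pm lt]]|H]; first exact: IH m lt Pm.
exists n; split=> // m Pm; rewrite leqNgt; apply/negP => lt; apply: H; by exists m.
Qed.

Lemma bb_suffix e1 e2 g : bb (e1 ++ e2 ++ g) g -> bb (e2 ++ g) g.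
Proof.
move=> H; case: (ex_min (cpath_exists g)) => n [Hn Hmin].
have Hc0 := @cpath_suffix e1 (e2 ++ g) n (cpath_bb Hn (bb_sym H)).
have [[//]|[Hn0 Hc]] := @cpath_split g _ _ Hc0 e2 erefl.
have := Hmin _ Hc; clear -Hn0; case: n Hn0 => // n _ /=; by rewrite ltnn.
Qed.

Definition Req (g g' : seq V) := forall X, bb (X :: g) g <-> bb (X :: g') g'.

Lemma Req_sym g g' : Req g g' -> Req g' g.
Proof. by move=> H X; split; move/H. Qed.

Lemma star a g g' : bb (a ++ g) g -> Req g g' -> bb (a ++ g') g'.
Proof.
elim: a => [|X a IH] H Hr /=; first exact: bb_refl.
have H1 : bb (a ++ g) g by exact: (@bb_suffix [:: X] a g H).
have H2 := IH H1 Hr.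
have H3 : bb (X :: g) g.
  apply: bb_trans _ H. apply: bb_sym. exact: (@bb_congr_r [:: X] _ _ H1).
have H4 := (Hr X).1 H3.
apply: bb_trans _ H4. exact: (@bb_congr_r [:: X] _ _ H2).
Qed.

Lemma req_bb g g' a b : Req g g' -> bb (a ++ g) (b ++ g) -> bb (a ++ g') (b ++ g').
Proof.
move=> Hr Hab.
pose B x y := exists a b g g', x = a ++ g' /\ y = b ++ g' /\ bb (a ++ g) (b ++ g) /\ Req g g'.
have bbB x y : bb x y -> B x y.
  by move=> H; exists x, y, [::], [::]; rewrite !cats0; split=> //; split=> //; split=> //.
exists B; split; last by exists a, b, g, g'.
apply: sym_bisim => [x y [a1 [b1 [g1 [g1' [-> [-> [H Hr1]]]]]]]|].
  by exists b1, a1, g1, g1'; split=> //; split=> //; split=> //; apply: bb_sym.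
move=> x y [a1 [b1 [g1 [g1' [-> [-> [H Hr1]]]]]]].
case: (classic (bb (a1 ++ g1) g1)) => Ha.
  have Hb : bb (b1 ++ g1) g1 := bb_trans (bb_sym H) Ha.
  apply: transfer_mono (bb_transfer _) => //.
  exact: bb_trans (star Ha Hr1) (bb_sym (star Hb Hr1)).
case: (classic (bb (b1 ++ g1) g1)) => Hb.
  apply: transfer_mono (bb_transfer _) => //.
  exact: bb_trans (star (bb_trans H Hb) Hr1) (bb_sym (star Hb Hr1)).
have Ha0 : a1 != [::] by case: a1 Ha H => // Ha; case: Ha; apply: bb_refl.
have Hb0 : b1 != [::] by case: b1 Hb H => // Hb; case: Hb; apply: bb_refl.
move=> c s' /(step_cat Ha0) [a' [Sa ->]].
case: (bb_transfer H (step_catl g1 Sa)) => [[-> Hy]|[tk [t' [P [S Hb']]]]].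
  by left; split=> //; exists a', b1, g1, g1'.
right.
have PT : forall u, clos_refl_trans_1n _ (fun x y => step x None y /\ bb (a1 ++ g1) y) (b1 ++ g1) u ->
  exists b'', u = b'' ++ g1 /\ b'' != [::] /\
    clos_refl_trans _ (fun x y => step x None y /\ B (a1 ++ g1') y) (b1 ++ g1') (b'' ++ g1').
  move=> u P1.
  have : forall z, clos_refl_trans_1n _ (fun x y => step x None y /\ bb (a1 ++ g1) y) z u ->
    forall bz, z = bz ++ g1 -> bz != [::] ->
    clos_refl_trans _ (fun x y => step x None y /\ B (a1 ++ g1') y) (b1 ++ g1') (bz ++ g1') ->
    exists b'', u = b'' ++ g1 /\ b'' != [::] /\
    clos_refl_trans _ (fun x y => step x None y /\ B (a1 ++ g1') y) (b1 ++ g1') (b'' ++ g1').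
    move=> z Pz; elim: Pz => [w|w y0 w2 [Sw Hy] P' IH] bz Hz Hbz Pb.
      by exists bz.
    move: Sw; rewrite Hz => /(step_cat Hbz) [bz' [Sbz Hyz]].
    have Hbz' : bz' != [::] by case: bz' Hyz Sbz => // Hyz; rewrite Hyz in Hy.
    apply: (IH _ Hyz Hbz'); apply: (rt_trans _ _ _ _ _ Pb); apply: rt_step; split.
      exact: step_catl.
    by exists a1, bz', g1, g1'; split=> //; split=> //; split=> //; rewrite -Hyz.
  by move=> Hgen; exact: (Hgen _ P1 b1 erefl Hb0 (rt_refl _ _ _)).
case: (PT _ (clos_rt_rt1n _ _ _ _ P)) => bk [Htk [Hbk Pk]].
move: S; rewrite Htk => /(step_cat Hbk) [b' [Sb Ht']].
exists (bk ++ g1'), (b' ++ g1'); split=> //; split; first exact: step_catl.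
by exists a', b', g1, g1'; split=> //; split=> //; split=> //; rewrite -Ht'.
Qed.

Local Notation rf := (redundancy_free R).

Lemma rf_nil g : rf [::] g.
Proof. by case=> [[|? ?] [X [b [H _]]]]. Qed.

Lemma rf_cons X a g : rf (X :: a) g <-> rf a g /\ ~ bb (X :: a ++ g) (a ++ g).
Proof.
split.
- move=> H; split.
  + move=> [dl [Y [b [Ha Hb]]]]; apply: H; exists (X :: dl), Y, b; by rewrite Ha.
  + move=> Hb; apply: H; by exists [::], X, a.
- move=> [H1 H2] [[|Y dl] [Z [b [Ha Hb]]]].
  + by case: Ha => HX Ha; subst; apply: H2.
  + case: Ha => _ Ha; apply: H1; by exists dl, Z, b.
Qed.

Lemma rf_cat a b g : rf (a ++ b) g <-> rf a (b ++ g) /\ rf b g.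
Proof.
elim: a => [|X a IH] /=; first by split; [move=> H; split=> //; exact: rf_nil|case].
rewrite !rf_cons IH -catA; tauto.
Qed.

Lemma bb_Req g g' : bb g g' -> Req g g'.
Proof.
move=> H X; split=> H1.
- apply: bb_trans (bb_trans H1 H). apply: bb_sym. exact: (@bb_congr_r [:: X] _ _ H).
- apply: bb_trans (bb_trans H1 (bb_sym H)). exact: (@bb_congr_r [:: X] _ _ H).
Qed.

Lemma rf_req a g g' : Req g g' -> rf a g -> rf a g'.
Proof.
move=> Hr; elim: a => [|X a IH]; first by move=> _; exact: rf_nil.
rewrite !rf_cons => [[H1 H2]]; split; first exact: IH.
move=> H3; apply: H2. apply: (req_bb (Req_sym Hr) (a := X :: a) (b := a)). exact: H3.
Qed.

Lemma reduce e g : exists r, rf r g /\ bb (r ++ g) (e ++ g) /\ (~ bb (e ++ g) g -> r != [::]).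
Proof.
elim: e => [|X e [r [H1 [H2 H3]]]].
  exists [::]; split; [exact: rf_nil|split; [exact: bb_refl|by move=> H; case: H; apply: bb_refl]].
case: (classic (bb (X :: r ++ g) (r ++ g))) => Hx.
- exists r; split=> //; split.
  + apply: bb_trans (bb_sym Hx) _. exact: (@bb_congr_r [:: X] _ _ H2).
  + move=> Hn; case: r H1 H2 H3 Hx => // _ H2 _ Hx; case: Hn => /=.
    exact: bb_trans (@bb_congr_r [:: X] _ _ (bb_sym H2)) Hx.
- exists (X :: r); split; first by apply/rf_cons.
  split=> //. exact: (@bb_congr_r [:: X] _ _ H2).
Qed.

Lemma rf_size a g n : rf a g -> cpath (a ++ g) n -> size a <= n.
Proof.
elim: a n => [|X a IH] n //= /rf_cons [H1 H2] Hc.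
have [[Hb _]|[Hn Hc']] := @cpath_split (a ++ g) _ _ Hc [:: X] erefl; first by case: H2.
have := IH _ H1 Hc'; case: n Hn {Hc Hc'} => // n _.
Qed.

Lemma path_form s b x u : clos_refl_trans_1n _ (fun x y => step x None y /\ bb s y) x u ->
  forall th, x = th ++ b -> th != [::] -> ~ bb s b -> exists th', u = th' ++ b /\ th' != [::].
Proof.
elim=> [w|w y w2 [Sw Hy] P' IH] th Hz Hth Hn; first by exists th.
move: Sw; rewrite Hz => /(step_cat Hth) [th' [_ Hyz]].
apply: (IH th') => //. by case: th' Hyz => // Hyz; rewrite Hyz in Hy.
Qed.

Lemma tails e a th b : bb (e ++ a) (th ++ b) ->
  (exists z, bb a (z ++ b)) \/ (exists z, bb b (z ++ a)).
Proof.
move=> Hb0.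
have H : forall e z, clos_refl_trans_1n _ (fun u v => exists c, step u c v) e z -> z = [::] ->
  forall th, bb (e ++ a) (th ++ b) -> (exists z, bb a (z ++ b)) \/ (exists z, bb b (z ++ a)).
  move=> {Hb0}e z P; elim: P => [w|w y w2 [c Sw] P' IH] Hz {}th Hb; first by subst w; left; exists th.
  case: (classic (bb (w ++ a) b)) => Hwb; first by right; exists w; apply: bb_sym.
  have Hth : th != [::] by case: th Hb => // Hb; case: Hwb.
  case: (bb_transfer Hb (step_catl a Sw)) => [[_ Hy]|[tk [t' [P [S Hb']]]]].
    exact: (IH Hz th Hy).
  case: (path_form (clos_rt_rt1n _ _ _ _ P) erefl Hth Hwb) => th' [Htk Hth'].
  move: S; rewrite Htk => /(step_cat Hth') [th'' [_ Ht']].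
  by apply: (IH Hz th''); rewrite -Ht'.
exact: (H _ _ (clos_rt_rt1n _ _ _ _ (reach_nil e)) erefl th Hb0).
Qed.

Lemma nonnil_size (s : seq V) : s != [::] -> 0 < size s.
Proof. by case: s. Qed.

Lemma split_max A g dl : rf dl [::] -> bb dl (A :: g) ->
  (forall dl', rf dl' [::] -> bb dl' (A :: g) -> size dl' <= size dl) ->
  exists d1 d2, dl = d1 ++ d2 /\ bb d2 g.
Proof.
move=> Hrf Hbb Hmax.
pose P n := exists d1 d2 z, dl = d1 ++ d2 /\ size d1 = n /\ bb g (z ++ d2).
have [n [[d1 [d2 [z [Hdl [Hs Hz]]]]] Hmin]] : exists n, P n /\ forall m, P m -> n <= m.
  apply: ex_min; exists (size dl), dl, [::], g; rewrite !cats0; split=> //; split=> //; exact: bb_refl.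
have noP : forall d1', size d1' < n -> forall d2' z', dl = d1' ++ d2' -> ~ bb g (z' ++ d2').
  move=> d1' Hlt d2' z' Hd Hb. have : P (size d1') by exists d1', d2', z'.
  by move/Hmin; rewrite leqNgt Hlt.
case/lastP: d1 Hdl Hs => [|d1' X] Hdl Hs.
  exists [::], dl; split=> //.
  have H1 : bb (z ++ [:: A] ++ g) g.
    apply: bb_sym; apply: bb_trans Hz _; rewrite /= in Hdl; rewrite -Hdl.
    exact: bb_congr_r.
  have := @bb_suffix z [:: A] g H1 => /= H2.
  exact: bb_trans Hbb H2.
rewrite cat_rcons in Hdl. rewrite size_rcons in Hs.
have Hlt : size d1' < n by rewrite -Hs.
have [[z' Hz']|[z0 Hz0]] := @tails d1' (X :: d2) [:: A] g (eq_ind_r (fun x => bb x _) Hbb (esym Hdl)).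
2: by case: (noP _ Hlt _ _ Hdl Hz0).
case: (classic (bb (z ++ d2) d2)) => Hzd.
  exists (rcons d1' X), d2; split; first by rewrite cat_rcons.
  exact: bb_sym (bb_trans Hz Hzd).
case: (reduce z d2) => rz [Hrz [Hbz Hnz]].
have Hnz' := Hnz Hzd.
case: (reduce z' (rz ++ d2)) => rz' [Hrz' [Hbz' Hnz2]].
have E1 : bb (rz ++ d2) g := bb_trans Hbz (bb_sym Hz).
have E2 : bb (z' ++ rz ++ d2) (z' ++ g) := bb_congr_r z' E1.
have E3 : bb (rz' ++ rz ++ d2) (X :: d2) := bb_trans Hbz' (bb_trans E2 (bb_sym Hz')).
have Hnz2' : rz' != [::].
  apply: Hnz2 => Hc. apply: (noP _ Hlt _ [::] Hdl) => /=.
  apply: bb_sym; apply: bb_trans (bb_trans Hz' (bb_sym E2)) _.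
  exact: bb_trans Hc E1.
have Hrf' : rf (d1' ++ rz' ++ rz ++ d2) [::].
  move: Hrf; rewrite Hdl => /rf_cat [Hr1 /rf_cons [Hr2 _]].
  apply/rf_cat; split.
    apply: rf_req Hr1; apply: bb_Req; rewrite !cats0; exact: bb_sym E3.
  apply/rf_cat; split; first by rewrite cats0.
  by apply/rf_cat; split=> //; rewrite cats0.
have Hbb' : bb (d1' ++ rz' ++ rz ++ d2) (A :: g).
  apply: bb_trans Hbb; rewrite Hdl; exact: bb_congr_r.
have := Hmax _ Hrf' Hbb'; rewrite Hdl !size_cat /=.
have := nonnil_size Hnz'; have := nonnil_size Hnz2'; lia.
Qed.

Fixpoint ltl (s t : seq V) : Prop :=
  match s, t with
  | x :: s', y :: t' => (x < y)%O \/ (x = y /\ ltl s' t')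
  | _, _ => False
  end.

Lemma ltl_cat p u v : ltl (p ++ u) (p ++ v) <-> ltl u v.
Proof.
elim: p => [|x p IH] //=; rewrite ltxx; split; [by case=> [//|[_ /IH]]|by move/IH=> H; right].
Qed.

Lemma ltl_asym s t : ltl s t -> ltl t s -> False.
Proof.
elim: s t => [|x s IH] [|y t] //= [H1|[E1 H1]] [H2|[E2 H2]].
- by have := lt_trans H1 H2; rewrite ltxx.
- by subst; rewrite ltxx in H1.
- by subst; rewrite ltxx in H2.
- exact: IH H1 H2.
Qed.

Lemma lex_same (a b : seq V) : size a = size b -> lexlt a b ->
  exists a' b' A B g, a = a' ++ A :: g /\ b = b' ++ B :: g /\ (A < B)%O.
Proof.
move=> Hs [[pre [Hp Hb]]|H] //.
by move: Hs; rewrite Hb size_cat; case: pre Hp {Hb} => // x p _ /=; lia.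
Qed.

Lemma lex_ltl (a b : seq V) : size a = size b -> lexlt a b -> ltl (rev a) (rev b).
Proof.
move=> Hs /(lex_same Hs) [a' [b' [A [B [g [-> [-> H]]]]]]].
rewrite !rev_cat !rev_cons -!cats1 -!catA ltl_cat /=; by left.
Qed.

Lemma ltl_lex (u v : seq V) : size u = size v -> ltl u v -> lexlt (rev u) (rev v).
Proof.
elim: u v => [|x u IH] [|y v] //= [] Hs [H|[E H]].
- right; exists (rev u), (rev v), x, y, [::]; rewrite !rev_cons -!cats1; by split.
- subst y. have Hs' : size (rev u) = size (rev v) by rewrite !size_rev.
  have [a' [b' [A [B [g [Ha [Hb H1]]]]]]] := lex_same Hs' (IH _ Hs H).
  right; exists a', b', A, B, (rcons g x); rewrite !rev_cons Ha Hb -!cats1 -!catA; by split.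
Qed.

Lemma lex_comb (x1 x2 y1 y2 : seq V) : size x1 = size y1 -> size x2 = size y2 ->
  (x1 = y1 \/ lexlt y1 x1) -> (x2 = y2 \/ lexlt y2 x2) ->
  x1 ++ x2 = y1 ++ y2 \/ lexlt (y1 ++ y2) (x1 ++ x2).
Proof.
move=> S1 S2 [->|H1] [->|H2]; first by left.
- have [a' [b' [A [B [g [Ha [Hb H]]]]]]] := lex_same (esym S2) H2.
  right; right; exists (y1 ++ a'), (y1 ++ b'), A, B, g; rewrite Ha Hb !catA; by split.
- have [a' [b' [A [B [g [Ha [Hb H]]]]]]] := lex_same (esym S1) H1.
  right; right; exists a', b', A, B, (g ++ y2); rewrite Ha Hb -!catA; by split.
- have [a' [b' [A [B [g [Ha [Hb H]]]]]]] := lex_same (esym S2) H2.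
  right; right; exists (y1 ++ a'), (x1 ++ b'), A, B, g; rewrite Ha Hb !catA; by split.
Qed.

Definition rk (x : V) := #|[pred y : V | (y < x)%O]|.

Lemma rk_lt x y : (x < y)%O -> rk x < rk y.
Proof.
move=> H; apply: proper_card; apply/properP; split.
  by apply/subsetP=> z; rewrite !inE => Hz; exact: lt_trans Hz H.
by exists x; rewrite !inE ?ltxx.
Qed.

Lemma ltl_min (n : nat) (Q : seq V -> Prop) : (exists s, Q s) -> (forall s, Q s -> size s = n) ->
  exists s, Q s /\ forall t, Q t -> t = s \/ ltl s t.
Proof.
elim: n Q => [|n IH] Q [s0 Hs0] Hsz.
  exists s0; split=> // t Ht; left; by case: t Ht (Hsz _ Ht) => // _ _; case: s0 Hs0 (Hsz _ Hs0).
have [k [[x0 [Hk [u Hu]]] Hmin]] : exists k, (exists x, rk x = k /\ exists u, Q (x :: u)) /\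
  forall m, (exists x, rk x = m /\ exists u, Q (x :: u)) -> k <= m.
  apply: ex_min; case: s0 Hs0 (Hsz _ Hs0) => // x u Hxu _; by exists (rk x), x; split=> //; exists u.
have [u0 [Hu0 Hmin0]] := IH (fun u => Q (x0 :: u)) (ex_intro _ u Hu) (fun u Hq => eq_add_S _ _ (Hsz _ Hq)).
exists (x0 :: u0); split=> // t Ht.
case: t Ht (Hsz _ Ht) => // y v Hyv _.
case: (ltgtP x0 y) => [Hlt|Hgt|Heq].
- by right; left.
- have := Hmin (rk y) (ex_intro _ y (conj erefl (ex_intro _ v Hyv))).
  by rewrite -Hk leqNgt rk_lt.
- subst y; case: (Hmin0 _ Hyv) => [->|H]; [by left|by right; right].
Qed.

Lemma lex_min (n : nat) (P : seq V -> Prop) : (exists s, P s) -> (forall s, P s -> size s = n) ->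
  exists s, P s /\ forall t, P t -> t = s \/ lexlt s t.
Proof.
move=> [s0 H0] Hsz.
have E1 : exists u, P (rev u) by exists (rev s0); rewrite revK.
have E2 : forall u, P (rev u) -> size u = n by move=> u Hq; rewrite -(size_rev u) Hsz.
have [u [Hu Hm]] := @ltl_min n (fun u => P (rev u)) E1 E2.
exists (rev u); split=> // t Ht.
have Ht' : P (rev (rev t)) by rewrite revK.
case: (Hm _ Ht') => [E|H]; first by left; rewrite -E revK.
have Hs : size u = size (rev t) by rewrite size_rev (Hsz _ Ht) -(Hsz _ Hu) size_rev.
by right; have := ltl_lex Hs H; rewrite revK.
Qed.

Local Notation cand := (candidate R).

Lemma max_size (P : seq V -> Prop) m : (exists s, P s) -> (forall s, P s -> size s <= m) ->
  exists s, P s /\ forall t, P t -> size t <= size s.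
Proof.
move=> [s0 H0] Hb.
have [k [[s [Hs Hk]] Hmin]] : exists k, (exists s, P s /\ m - size s = k) /\
    forall j, (exists s, P s /\ m - size s = j) -> k <= j.
  by apply: ex_min; exists (m - size s0), s0.
exists s; split=> // t Ht.
have := Hmin (m - size t) (ex_intro _ t (conj Ht erefl)).
have := Hb _ Ht; have := Hb _ Hs; lia.
Qed.

Lemma co_exists A g : exists al, canonical_output R A g al.
Proof.
have [m Hm] := cpath_exists (A :: g).
have [r [Hr [Hbr _]]] := reduce [:: A] g.
have Hbd : forall c, cand A g c -> size c <= m.
  move=> c [Hc1 Hc2]; exact: (rf_size Hc2 (cpath_bb Hm (bb_sym Hc1))).
have [s [Hs Hmax]] := max_size (ex_intro _ r (conj Hbr Hr)) Hbd.
have [al [[Hal Hsz] Hlex]] := @lex_min (size s) (fun x => cand A g x /\ size x = size s)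
   (ex_intro _ s (conj Hs erefl)) (fun x H => proj2 H).
exists al; split=> //; split.
  by move=> b Hb; rewrite Hsz; apply: Hmax.
by move=> b Hb Hbs; apply: Hlex; split=> //; rewrite Hbs Hsz.
Qed.

Lemma co_unique A g a b : canonical_output R A g a -> canonical_output R A g b -> a = b.
Proof.
move=> [Ha [Ha1 Ha2]] [Hb [Hb1 Hb2]].
have Hs : size a = size b by apply/eqP; rewrite eqn_leq Hb1 ?Ha1.
case: (Ha2 _ Hb (esym Hs)) => [->//|H1].
case: (Hb2 _ Ha Hs) => [//|H2].
case: (ltl_asym (lex_ltl Hs H1) (lex_ltl (esym Hs) H2)).
Qed.

Definition copt A g := epsilon (inhabits [::]) (canonical_output R A g).

Lemma copt_spec A g : canonical_output R A g (copt A g).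
Proof. exact: epsilon_spec (co_exists A g). Qed.

Lemma Req_trans a b c : Req a b -> Req b c -> Req a c.
Proof. by move=> H1 H2 X; split => [/H1/H2|/H2/H1]. Qed.

Lemma Req_refl a : Req a a.
Proof. by []. Qed.

Lemma co_req A g g' : Req g g' -> canonical_output R A g = canonical_output R A g'.
Proof.
move=> Hr.
have Hc : forall g g' x, Req g g' -> cand A g x -> cand A g' x.
  move=> h h' x Hh [H1 H2]; split; last exact: rf_req H2.
  exact: (req_bb Hh (a := x) (b := [:: A])).
apply: functional_extensionality => x; apply: propositional_extensionality.
have Hr' := Req_sym Hr.
split=> [[H1 [H2 H3]]|[H1 [H2 H3]]]; (split; [|split]).
- exact: Hc H1.
- by move=> b /(Hc _ _ _ Hr'); apply: H2.
- by move=> b /(Hc _ _ _ Hr') Hb; apply: H3.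
- exact: Hc H1.
- by move=> b /(Hc _ _ _ Hr); apply: H2.
- by move=> b /(Hc _ _ _ Hr) Hb; apply: H3.
Qed.

Lemma Rset_Req g g' : Rset R g = Rset R g' -> Req g g'.
Proof. by move=> E X; have := f_equal (fun f => f X) E; rewrite /Rset /= => ->. Qed.

Lemma Req_cons A g g' : Req g g' -> Req (A :: g) (A :: g').
Proof.
move=> Hr X; split=> H.
- exact: (req_bb Hr (a := [:: X; A]) (b := [:: A])).
- exact: (req_bb (Req_sym Hr) (a := [:: X; A]) (b := [:: A])).
Qed.

Fixpoint Nf (s : seq V) : seq V := if s is A :: g then copt A g ++ Nf g else [::].

Lemma run_N s : exists g', (tr_run (tr_init (canonical_transducer R)) s).1 = Rset R g' /\ Req g' s /\
  (tr_run (tr_init (canonical_transducer R)) s).2 = Nf s.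
Proof.
elim: s => [|A s [g' [H1 [H2 H3]]]] /=; first by exists [::].
case E: (tr_run _ s) H1 H3 => [q out] /= H1 H3; subst q out.
rewrite /canon_delta /=.
set gm := epsilon _ (fun g => Rset R g = Rset R g').
have Hgm : Rset R gm = Rset R g' by apply: (epsilon_spec _ (fun g => Rset R g = Rset R g')); exists g'.
have Hq : Req gm s := Req_trans (Rset_Req Hgm) H2.
exists (A :: gm); split=> //; split; first exact: Req_cons.
by rewrite (co_req A Hq).
Qed.

Lemma TG_N s : TG R s = Nf s.
Proof. by have [g' [_ [_ H]]] := run_N s; rewrite /TG /tr_out H. Qed.

Lemma split_cand A g r : rf r [::] -> bb r (A :: g) ->
  (forall r', rf r' [::] -> bb r' (A :: g) -> size r' <= size r) ->
  exists d1 d2, r = d1 ++ d2 /\ cand A g d1 /\ rf d2 [::] /\ bb d2 g.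
Proof.
move=> Hrf Hb Hmax.
have [d1 [d2 [Hr Hd2]]] := split_max Hrf Hb Hmax.
move: Hrf; rewrite Hr => /rf_cat [H1 H2].
exists d1, d2; split=> //; split=> //; split.
- apply: bb_trans _ Hb; rewrite Hr; exact: bb_congr_r (bb_sym Hd2).
- apply: rf_req H1; apply: bb_Req; rewrite cats0; exact: Hd2.
Qed.

Lemma Nf_spec s : rf (Nf s) [::] /\ bb (Nf s) s /\
  (forall r, rf r [::] -> bb r s -> size r <= size (Nf s)) /\
  (forall r, rf r [::] -> bb r s -> size r = size (Nf s) -> r = Nf s \/ lexlt (Nf s) r).
Proof.
elim: s => [|A g [IH1 [IH2 [IH3 IH4]]]].
  have Hz : forall r, rf r [::] -> bb r [::] -> r = [::].
    move=> r; case/lastP: r => // r X Hrf Hb; exfalso.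
    move: Hrf; rewrite -cats1 => /rf_cat [_ /rf_cons [_ H]]; apply: H => /=.
    have := @bb_suffix r [:: X] [::]; rewrite cats0; apply. by rewrite -cats1 in Hb.
  split; first exact: rf_nil. split; first exact: bb_refl.
  by split=> r Hr Hb; rewrite (Hz _ Hr Hb) //; left.
have [Hcand [Hcmax Hclex]] := copt_spec A g.
rewrite /=; set c := copt A g in Hcand Hcmax Hclex *.
have M1 : rf (c ++ Nf g) [::].
  apply/rf_cat; split=> //. apply: rf_req (proj2 Hcand). apply: bb_Req; rewrite cats0.
  exact: bb_sym IH2.
have M2 : bb (c ++ Nf g) (A :: g) by exact: bb_trans (bb_congr_r c IH2) (proj1 Hcand).
split=> //; split=> //.
have Hsplit : forall r, rf r [::] -> bb r (A :: g) ->
  (forall r', rf r' [::] -> bb r' (A :: g) -> size r' <= size r) ->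
  exists d1 d2, r = d1 ++ d2 /\ size d1 <= size c /\ size d2 <= size (Nf g) /\
    (size d1 = size c -> d1 = c \/ lexlt c d1) /\ (size d2 = size (Nf g) -> d2 = Nf g \/ lexlt (Nf g) d2).
  move=> r Hr Hb Hmax.
  have [d1 [d2 [-> [Hc1 [Hd2 Hbd2]]]]] := split_cand Hr Hb Hmax.
  exists d1, d2; split=> //.
  split; first exact: Hcmax.
  split; first exact: IH3.
  split=> H; [exact: Hclex|exact: IH4].
have [m Hm] := cpath_exists (A :: g).
have Hbd : forall r, (rf r [::] /\ bb r (A :: g)) -> size r <= m.
  move=> r [Hr Hb]; apply: (rf_size Hr); rewrite cats0; exact: (cpath_bb Hm (bb_sym Hb)).
have [rm [[Hrm1 Hrm2] Hmax]] := max_size (ex_intro _ _ (conj M1 M2)) Hbd.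
have [d1 [d2 [Hrm [S1 [S2 _]]]]] := Hsplit _ Hrm1 Hrm2 (fun r' H1 H2 => Hmax r' (conj H1 H2)).
have Bnd : forall r, rf r [::] -> bb r (A :: g) -> size r <= size c + size (Nf g).
  move=> r Hr Hb; apply: leq_trans (Hmax _ (conj Hr Hb)) _; rewrite Hrm size_cat; lia.
split; first by move=> r Hr Hb; rewrite size_cat; exact: Bnd.
move=> r Hr Hb; rewrite size_cat => Hs.
have [e1 [e2 [Er [T1 [T2 [L1 L2]]]]]] : exists d1 d2, r = d1 ++ d2 /\ size d1 <= size c /\ size d2 <= size (Nf g) /\
    (size d1 = size c -> d1 = c \/ lexlt c d1) /\ (size d2 = size (Nf g) -> d2 = Nf g \/ lexlt (Nf g) d2).
  by apply: Hsplit => // r' H1 H2; rewrite Hs; exact: Bnd.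
subst r; rewrite size_cat in Hs.
have E1 : size e1 = size c by lia.
have E2 : size e2 = size (Nf g) by lia.
exact: lex_comb E1 E2 (L1 E1) (L2 E2).
Qed.

End Dev.

Theorem theorem4p7 (d : Order.disp_t) (V : finOrderType d) (Act : finType)
  (R : rules V Act) :
  normed R ->
  forall alpha beta : seq V, TG R alpha = TG R beta <-> bbisim R alpha beta.
Proof.
move=> HN a b; rewrite !(TG_N HN).
have [A1 [A2 [A3 A4]]] := Nf_spec HN a; have [B1 [B2 [B3 B4]]] := Nf_spec HN b.
split=> [E|H].
  apply: bb_trans (bb_sym A2) _; rewrite E; exact: B2.
have Ha : bbisim R (Nf R a) b := bb_trans A2 H.
have Hb : bbisim R (Nf R b) a := bb_trans B2 (bb_sym H).
have Hs : size (Nf R b) = size (Nf R a).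
  by apply/eqP; rewrite eqn_leq (A3 _ B1 Hb) (B3 _ A1 Ha).
case: (A4 _ B1 Hb Hs) => [->//|L1].
case: (B4 _ A1 Ha (esym Hs)) => [//|L2].
case: (ltl_asym (lex_ltl (esym Hs) L1) (lex_ltl Hs L2)).
Qed.
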